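(* Let $K$ be a compact scattered space. If a space $X$ is regular and $K$-selective, then every open subspace of $X$ is $K$-selective.
   Context: All spaces are assumed $T_1$. A space is scattered if every nonempty subspace has an isolated point. For spaces $Y$, $X$, a map $\varphi:Y\to\mathcal P(X)\setminus\{\emptyset\}$ is lower semicontinuous (l.s.c.) if $\{y:\varphi(y)\cap U\neq\emptyset\}$ is open in $Y$ for every open $U\subseteq X$; a selection is a map $f:Y\to X$ with $f(y)\in\varphi(y)$ for all $y$. $X$ is $Y$-selective if every l.s.c. map from $Y$ to the nonempty closed subsets of $X$ has a continuous selection. *)

(* Defs.v *)
From HB Require Import structures.
From mathcomp Require Import all_boot all_order all_algebra.
From mathcomp Require Import all_classical all_reals all_analysis.
Set Implicit Arguments. Unset Strict Implicit. Unset Printing Implicit Defensive.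
Local Open Scope classical_set_scope.

Definition scattered (K : topologicalType) : Prop :=
  forall A : set K, A !=set0 ->
    exists x, A x /\ exists U : set K, open U /\ U `&` A = [set x].

Definition lsc (Y X : topologicalType) (phi : Y -> set X) : Prop :=
  forall U : set X, open U -> open [set y | phi y `&` U !=set0].

Definition selective (Y X : topologicalType) : Prop :=
  forall phi : Y -> set X,
    (forall y, closed (phi y) /\ phi y !=set0) -> lsc phi ->
    exists f : Y -> X, continuous f /\ forall y, phi y (f y).

(* Main.v *)
Require Import Defs.
From HB Require Import structures.
From mathcomp Require Import all_boot all_order all_algebra.
From mathcomp Require Import all_classical all_reals all_analysis.
From mathcomp Require Import finmap.
Local Open Scope classical_set_scope.

Definition pt_of (K : topologicalType) (k : K) : Type := K.
HB.instance Definition _ (K : topologicalType) (k : K) := Topological.on (@pt_of K k).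
HB.instance Definition _ (K : topologicalType) (k : K) := isPointed.Build (@pt_of K k) k.

Lemma fin_cover (K : topologicalType) (O : K -> set K) :
  compact [set: K] -> (forall i, open (O i)) -> (forall z, O z z) ->
  exists D' : {fset K}, forall z, exists2 i, i \in D' & O i z.
Proof.
move=> cK oO Ozz.
have [[k _]|K0] := pselect (exists k : K, True); last first.
  by exists fset0 => z; exfalso; apply: K0; exists z.
have cK' : @compact (@pt_of K k) [set: @pt_of K k] by exact: cK.
rewrite compact_cover in cK'.
have [D' _ cov] := cK' K setT O (fun i _ => oO i)
  (fun z _ => ex_intro2 _ _ z I (Ozz z)).
by exists D' => z; have [i /= iD Oi] := cov z I; exists i.
Qed.

Lemma clos_fin (T : topologicalType) (I : eqType) (s : seq I) (F : I -> set T)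
  (U : set T) : (forall i, i \in s -> closure (F i) `<=` U) ->
  closure (\bigcup_(i in [set` s]) F i) `<=` U.
Proof.
elim: s => [|a s IH] H.
  have -> : \bigcup_(i in [set` [::]]) F i = set0.
    by apply/seteqP; split => x // [i].
  by rewrite closure0.
have -> : \bigcup_(i in [set` a :: s]) F i = F a `|` \bigcup_(i in [set` s]) F i.
  apply/seteqP; split => x.
    move=> [i /=]; rewrite in_cons => /orP [/eqP -> |iS] Fx; first by left.
    by right; exists i.
  move=> [Fx|[i /= iS Fx]]; first by exists a => //=; rewrite mem_head.
  by exists i => //=; rewrite in_cons iS orbT.
rewrite closureU => x [/H|]; first by apply; rewrite mem_head.
apply: IH => i iS; apply: H; by rewrite in_cons iS orbT.
Qed.

Theorem mainTheorem10 (K X : topologicalType) :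
  accessible_space K -> compact [set: K] -> scattered K ->
  accessible_space X -> regular_space X -> selective K X ->
  forall U : set X, open U -> selective K (set_type U).
Proof.
move=> _ cK _ _ regX selX U oU phi phiP lscphi.
have ex_V : forall y : K, exists V : set X,
    [/\ open V, exists p, phi y p /\ V (val p) & closure V `<=` U].
  move=> y; have [p php] := (phiP y).2.
  have Up : U (val p) by exact: set_mem (valP p).
  have : nbhs (val p) U by apply: open_nbhs_nbhs; split.
  move=> /regX [B nB clBU].
  exists B°; split; first exact: open_interior.
    by exists p; split => //; exact: nbhs_singleton (nbhs_interior nB).
  by apply: subset_trans clBU; apply: closureS; exact: interior_subset.
have [V HV] := choice ex_V.
have openpre : forall A : set X, open A -> open (val @^-1` A : set (set_type U)).
  by move=> A oA; exists A.
pose O y := [set z | phi z `&` (val @^-1` V y) !=set0].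
have oO : forall y, open (O y).
  by move=> y; apply: lscphi; apply: openpre; case: (HV y).
have Ozz : forall z, O z z.
  by move=> z; case: (HV z) => _ [p [? ?]] _; exists p.
have [D' cov] := @fin_cover K O cK oO Ozz.
pose W := \bigcup_(i in [set` (D' : seq K)]) V i.
have oW : open W by apply: bigcup_open => i _; case: (HV i).
have clWU : closure W `<=` U.
  by apply: clos_fin => i _; case: (HV i).
pose psi y := closure ((val @` phi y) `&` W).
have psiU : forall y, psi y `<=` U.
  by move=> y; apply: subset_trans clWU; apply: closureS; exact: subIsetr.
have psiP : forall y, closed (psi y) /\ psi y !=set0.
  move=> y; split; first exact: closed_closure.
  have [i iD [p [php Vp]]] := cov y.
  exists (val p); apply: subset_closure; split; first by exists p.
  by exists i.
have lscpsi : lsc psi.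
  move=> G oG.
  have -> : [set y | psi y `&` G !=set0] =
            [set y | phi y `&` (val @^-1` (W `&` G)) !=set0].
    apply/seteqP; split => y /=.
      move=> [x [clx Gx]].
      have [x' [[[p php <-] Wp] Gp]] : ((val @` phi y) `&` W) `&` G !=set0.
        by apply: clx; apply: open_nbhs_nbhs; split.
      by exists p.
    move=> [p [php [Wp Gp]]]; exists (val p); split => //.
    by apply: subset_closure; split => //; exists p.
  by apply: lscphi; apply: openpre; exact: openI.
have [f [cf fpsi]] := selX psi psiP lscpsi.
have fU : forall y, U (f y) := fun y => psiU y _ (fpsi y).
pose g (y : K) : set_type U := @exist X (fun x => x \in U) (f y) (mem_set (fU y)).
exists g; split.
  apply: (@continuous_comp_initial _ K X (@set_val X U)).
  exact: cf.
move=> y; apply: (phiP y).1 => B.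
rewrite nbhsE => -[B0 [oB0 B0g] B0B].
case: oB0 => A oA eA.
have : nbhs (f y) A.
  apply: open_nbhs_nbhs; split => //.
  by move: B0g; rewrite -eA.
move=> /((closureI (fpsi y)).1) [x [[p php <-] Ap]].
exists p; split => //; apply: B0B; rewrite -eA; exact: Ap.
Qed.
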